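(* Let $\mathcal{C}$ be the split Cayley algebra over a field $\mathbb{F}$ with norm $\mathrm{n}$. Then every $2$-local automorphism of $\mathcal{C}$ is an automorphism; that is, the set of $2$-local automorphisms of $\mathcal{C}$ equals $\mathrm{Aut}(\mathcal{C})$.
   Context: A Cayley (octonion) algebra over $\mathbb{F}$ is a unital nonassociative algebra $\mathcal{C}$ of dimension $8$ over $\mathbb{F}$ endowed with a quadratic form $\mathrm{n}:\mathcal{C}\to\mathbb{F}$ (the norm) such that $\mathrm{n}(xy)=\mathrm{n}(x)\mathrm{n}(y)$ for all $x,y$ and whose polar form $\mathrm{n}(x,y)=\mathrm{n}(x+y)-\mathrm{n}(x)-\mathrm{n}(y)$ is nondegenerate. The split Cayley algebra is the (unique up to isomorphism) Cayley algebra whose norm is isotropic, i.e. $\mathrm{n}(x)=0$ for some $x\neq 0$. A map $\Delta:\mathcal{C}\to\mathcal{C}$ (not assumed linear) is a $2$-local automorphism if for every pair $x,y\in\mathcal{C}$ there is an algebra automorphism $\varphi_{x,y}$ of $\mathcal{C}$ with $\Delta(x)=\varphi_{x,y}(x)$ and $\Delta(y)=\varphi_{x,y}(y)$. *)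

(* Defs.v *)
From HB Require Import structures.
From mathcomp Require Import all_boot all_order all_algebra.
Set Implicit Arguments. Unset Strict Implicit. Unset Printing Implicit Defensive.
Import GRing.Theory.
Local Open Scope ring_scope.

Section CayleyDefs.
Variables (F : fieldType) (V : vectType F).

Definition bilinear_mul (mul : V -> V -> V) : Prop :=
  (forall a x y z, mul (a *: x + y) z = a *: mul x z + mul y z) /\
  (forall a x y z, mul z (a *: x + y) = a *: mul z x + mul z y).

Definition polar (n : V -> F) (x y : V) : F := n (x + y) - n x - n y.

Definition quadratic_form (n : V -> F) : Prop :=
  [/\ forall a x, n (a *: x) = a ^+ 2 * n x,
      forall a x y z, polar n (a *: x + y) z = a * polar n x z + polar n y z
    & forall a x y z, polar n z (a *: x + y) = a * polar n z x + polar n z y].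

Definition nondegenerate_polar (n : V -> F) : Prop :=
  forall x, (forall y, polar n x y = 0) -> x = 0.

Definition cayley_algebra (mul : V -> V -> V) (n : V -> F) : Prop :=
  [/\ \dim {:V} = 8%N,
      bilinear_mul mul,
      exists e : V, forall x, mul e x = x /\ mul x e = x,
      quadratic_form n /\ nondegenerate_polar n
    & forall x y, n (mul x y) = n x * n y].

Definition isotropic (n : V -> F) : Prop := exists x : V, x != 0 /\ n x = 0.

Definition split_cayley_algebra (mul : V -> V -> V) (n : V -> F) : Prop :=
  cayley_algebra mul n /\ isotropic n.

Definition is_automorphism (mul : V -> V -> V) (f : V -> V) : Prop :=
  [/\ forall a x y, f (a *: x + y) = a *: f x + f y,
      bijective f
    & forall x y, f (mul x y) = mul (f x) (f y)].

(* 2-local automorphism (no linearity assumed) *)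
Definition two_local_automorphism (mul : V -> V -> V) (D : V -> V) : Prop :=
  forall x y : V, exists phi : V -> V,
    [/\ is_automorphism mul phi, D x = phi x & D y = phi y].

End CayleyDefs.

(* Main.v *)
Require Import Defs.
From HB Require Import structures.
From mathcomp Require Import all_boot all_order all_algebra.
From mathcomp Require Import ring.
From Stdlib Require Import Classical.
Set Implicit Arguments. Unset Strict Implicit. Unset Printing Implicit Defensive.
Import GRing.Theory.
Local Open Scope ring_scope.

Section Comp.
Variables (F : fieldType) (V : vectType F) (mul : V -> V -> V) (n : V -> F).
Hypothesis Hmul : bilinear_mul mul.
Hypothesis Hq : quadratic_form n.
Hypothesis Hnd : nondegenerate_polar n.
Hypothesis Hc : forall x y, n (mul x y) = n x * n y.
Variable e : V.
Hypothesis He : forall x, mul e x = x /\ mul x e = x.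

Local Notation b := (polar n).
Local Notation "x *o y" := (mul x y) (at level 40, left associativity).

Lemma oDl x y z : (x + y) *o z = x *o z + y *o z.
Proof. by have [H _] := Hmul; have := H 1 x y z; rewrite !scale1r. Qed.
Lemma oDr x y z : z *o (x + y) = z *o x + z *o y.
Proof. by have [_ H] := Hmul; have := H 1 x y z; rewrite !scale1r. Qed.
Lemma o0l z : 0 *o z = 0.
Proof. have H := oDl 0 0 z; rewrite addr0 in H. by apply: (addrI (0 *o z)); rewrite addr0 -H. Qed.
Lemma o0r z : z *o 0 = 0.
Proof. have H := oDr 0 0 z; rewrite addr0 in H. by apply: (addrI (z *o 0)); rewrite addr0 -H. Qed.
Lemma oZl a x z : (a *: x) *o z = a *: (x *o z).
Proof. by have [H _] := Hmul; have := H a x 0 z; rewrite !addr0 o0l addr0. Qed.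
Lemma oZr a x z : z *o (a *: x) = a *: (z *o x).
Proof. by have [_ H] := Hmul; have := H a x 0 z; rewrite !addr0 o0r addr0. Qed.
Lemma oNl x z : (- x) *o z = - (x *o z).
Proof. by rewrite -scaleN1r oZl scaleN1r. Qed.
Lemma oNr x z : z *o (- x) = - (z *o x).
Proof. by rewrite -scaleN1r oZr scaleN1r. Qed.
Lemma oBl x y z : (x - y) *o z = x *o z - y *o z.
Proof. by rewrite oDl oNl. Qed.
Lemma oBr x y z : z *o (x - y) = z *o x - z *o y.
Proof. by rewrite oDr oNr. Qed.

Lemma nZ a x : n (a *: x) = a ^+ 2 * n x.
Proof. by case: Hq. Qed.
Lemma n0 : n 0 = 0.
Proof. by rewrite -(scale0r 0) nZ expr2 !mul0r. Qed.
Lemma nN x : n (- x) = n x.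
Proof. by rewrite -scaleN1r nZ expr2 mulN1r opprK mul1r. Qed.
Lemma nD x y : n (x + y) = n x + n y + b x y.
Proof. by rewrite /polar; ring. Qed.
Lemma bC x y : b x y = b y x.
Proof. by rewrite /polar (addrC x y); ring. Qed.
Lemma bZl a x z : b (a *: x) z = a * b x z.
Proof. by case: Hq => _ H _; have := H a x 0 z; rewrite !addr0 /polar add0r n0 !subr0 subrr addr0. Qed.
Lemma bDl x y z : b (x + y) z = b x z + b y z.
Proof. by case: Hq => _ H _; have := H 1 x y z; rewrite scale1r mul1r. Qed.
Lemma bZr a x z : b z (a *: x) = a * b z x.
Proof. by rewrite bC bZl bC. Qed.
Lemma bDr x y z : b z (x + y) = b z x + b z y.
Proof. by rewrite bC bDl !(bC z). Qed.
Lemma b0l z : b 0 z = 0.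
Proof. by rewrite -(scale0r 0) bZl mul0r. Qed.
Lemma bNl x z : b (- x) z = - b x z.
Proof. by rewrite -scaleN1r bZl mulN1r. Qed.
Lemma bNr x z : b z (- x) = - b z x.
Proof. by rewrite -scaleN1r bZr mulN1r. Qed.
Lemma bBl x y z : b (x - y) z = b x z - b y z.
Proof. by rewrite bDl bNl. Qed.
Lemma bBr x y z : b z (x - y) = b z x - b z y.
Proof. by rewrite bDr bNr. Qed.
Lemma bxx x : b x x = 2 * n x.
Proof. by rewrite /polar -{1 2}[x]scale1r -scalerDl nZ; ring. Qed.

Lemma nondeg x y : (forall z, b x z = b y z) -> x = y.
Proof. move=> H; apply/eqP; rewrite -subr_eq0; apply/eqP/Hnd => z; by rewrite bBl H subrr. Qed.


Hypothesis Hnz : exists x : V, x != 0.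
Local Notation t x := (b x e).
Local Notation bar x := (t x *: e - x).

Lemma mule x : e *o x = x. Proof. by case: (He x). Qed.
Lemma mulxe x : x *o e = x. Proof. by case: (He x). Qed.

Lemma nE : n e = 1.
Proof.
have H : n e = n e * n e by rewrite -Hc mule.
have [H0|] := eqVneq (n e) 0; last first.
  by move=> ne0; apply: (mulfI ne0); rewrite mulr1 -H.
exfalso; case: Hnz => x; apply/negP; rewrite negbK; apply/eqP/Hnd => y.
have nz : forall z, n z = 0 by move=> z; rewrite -(mule z) Hc H0 mul0r.
by rewrite /polar !nz !subr0.
Qed.

Lemma bee : b e e = 2.
Proof. by rewrite bxx nE mulr1. Qed.

Lemma I1 x y z : b (x *o y) (x *o z) = n x * b y z.
Proof.
have := Hc x (y + z); rewrite oDr !nD !Hc => H.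
by apply: (addrI (n x * n y + n x * n z)); rewrite H; ring.
Qed.

Lemma I1' x y z : b (y *o x) (z *o x) = b y z * n x.
Proof.
have := Hc (y + z) x; rewrite oDl !nD !Hc => H.
by apply: (addrI (n y * n x + n z * n x)); rewrite H; ring.
Qed.

Lemma I2 x y w z : b (x *o y) (w *o z) + b (x *o z) (w *o y) = b x w * b y z.
Proof.
have := I1 (x + w) y z; rewrite !oDl !bDl !bDr !I1 nD => H.
rewrite (bC (w *o y)) in H.
transitivity ((n x + n w + b x w) * b y z - n x * b y z - n w * b y z); last by ring.
rewrite -H; ring.
Qed.

Lemma I3 x y z : b (x *o y) z = b y (bar x *o z).
Proof.
have := I2 x y e z; rewrite !mule => H.
rewrite oBl oZl mule bBr bZr -H bC (bC (x *o z)); ring.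
Qed.

Lemma I3' x y z : b (x *o y) z = b x (z *o bar y).
Proof.
have := I2 x y z e; rewrite !mulxe => H.
rewrite oBr oZr mulxe bBr bZr.
transitivity (b x z * t y - b x (z *o y)); last by ring.
by rewrite -H addrK.
Qed.

Lemma tbar x : t (bar x) = t x.
Proof. by rewrite bBl bZl bee; ring. Qed.

Lemma barK x : bar (bar x) = x.
Proof. by rewrite tbar opprB addrC subrK. Qed.

Lemma nbar x : n (bar x) = n x.
Proof. by rewrite nD nZ nN nE bNr bZl (bC e x); ring. Qed.

Lemma I4 x y : bar x *o (x *o y) = n x *: y.
Proof.
apply: nondeg => z; by rewrite I3 barK I1 bZl.
Qed.

Lemma I4b x y : x *o (bar x *o y) = n x *: y.
Proof. by have := I4 (bar x) y; rewrite barK nbar. Qed.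

Lemma sq x y : x *o (x *o y) = t x *: (x *o y) - n x *: y.
Proof. by rewrite -(I4 x y) oBl oZl mule opprB addrC subrK. Qed.

Lemma sqe x : x *o x = t x *: x - n x *: e.
Proof. by have := sq x e; rewrite !mulxe. Qed.

Lemma swap4 (a c d f : V) : a - c - (d - f) = a - d - (c - f).
Proof. by rewrite !opprB addrACA [RHS]addrACA (addrC (- c)). Qed.

Section Aut.
Variable phi : V -> V.
Hypothesis Hphi : is_automorphism mul phi.

Lemma phiDZ a x y : phi (a *: x + y) = a *: phi x + phi y.
Proof. by case: Hphi => H _ _; apply: H. Qed.
Lemma phi0 : phi 0 = 0.
Proof.
have := phiDZ 1 0 0; rewrite !scale1r addr0 => H.
by apply: (addrI (phi 0)); rewrite addr0 -H.
Qed.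
Lemma phiZ a x : phi (a *: x) = a *: phi x.
Proof. by have := phiDZ a x 0; rewrite !addr0 phi0 addr0. Qed.
Lemma phiD x y : phi (x + y) = phi x + phi y.
Proof. by have := phiDZ 1 x y; rewrite !scale1r. Qed.
Lemma phiN x : phi (- x) = - phi x.
Proof. by rewrite -scaleN1r phiZ scaleN1r. Qed.
Lemma phiB x y : phi (x - y) = phi x - phi y.
Proof. by rewrite phiD phiN. Qed.
Lemma phiM x y : phi (x *o y) = phi x *o phi y.
Proof. by case: Hphi => _ _ H; apply: H. Qed.
Lemma phi_inj : injective phi.
Proof. by case: Hphi => _ /bij_inj ? _. Qed.

Lemma phie : phi e = e.
Proof.
case: Hphi => _ [g _ gK] _.
by have := phiM e (g e); rewrite mule gK mulxe.
Qed.

Lemma e_neq0 : e != 0.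
Proof. by apply/eqP => e0; have := nE; rewrite e0 n0 => /eqP; rewrite eq_sym oner_eq0. Qed.

Lemma phin x : n (phi x) = n x.
Proof.
set p := phi x.
have H1 : p *o p = t x *: p - n x *: e by rewrite /p -phiM sqe phiB !phiZ phie.
have H2 := sqe p.
have H : (t p - t x) *: p = (n p - n x) *: e.
  rewrite (scalerBl (t p)) (scalerBl (n p)); apply/eqP; rewrite -subr_eq0 -(subrr (p *o p)) {1}H2 {1}H1.
  by rewrite swap4.
have [tE|tN] := eqVneq (t p) (t x).
  move: H; rewrite tE subrr scale0r => /esym/eqP.
  by rewrite scaler_eq0 (negbTE e_neq0) orbF subr_eq0 => /eqP.
have Hp : p = ((n p - n x) / (t p - t x)) *: e.
  by rewrite mulrC -scalerA -H scalerA mulVf ?scale1r // subr_eq0.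
have Hx : x = ((n p - n x) / (t p - t x)) *: e.
  by apply: phi_inj; rewrite phiZ phie; exact: Hp.
by move: tN; rewrite Hp -Hx eqxx.
Qed.

Lemma phib x y : b (phi x) (phi y) = b x y.
Proof. by rewrite /polar -phiD !phin. Qed.

End Aut.

Definition idem f := n f = 0 /\ t f = 1.

Lemma idem_bar f : idem f -> idem (bar f).
Proof. by case=> h1 h2; split; rewrite ?nbar ?tbar. Qed.

Lemma idem_decomp g y : idem g ->
  y = (g *o y) *o g + (g *o y) *o bar g + (bar g *o y) *o bar g + (bar g *o y) *o bar (bar g).
Proof.
case=> g0 g1.
have Ee : e = g + bar g by rewrite g1 scale1r addrC subrK.
have h1 : (g *o y) *o g + (g *o y) *o bar g = g *o y by rewrite -oDr -Ee mulxe.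
have h2 : (bar g *o y) *o bar g + (bar g *o y) *o g = bar g *o y.
  by rewrite addrC -oDr -Ee mulxe.
by rewrite barK h1 -addrA h2 -oDl -Ee mule.
Qed.

Section Span.
Variable G : V -> V.
Hypothesis HG : forall a x y, G (a *: x + y) = a *: G x + G y.
Hypothesis HG0 : forall f, idem f -> G f = 0.

Lemma G0 : G 0 = 0.
Proof. have := HG 1 0 0; rewrite !scale1r addr0 => H. by apply: (addrI (G 0)); rewrite addr0 -H. Qed.
Lemma GD x y : G (x + y) = G x + G y.
Proof. by have := HG 1 x y; rewrite !scale1r. Qed.

Lemma GL g w : idem g -> n w = 0 -> b g w = 0 -> G w = 0.
Proof.
case=> g0 g1 w0 bw.
have ih : idem ((1 - t w) *: g + w).
  split; first by rewrite nD nZ bZl g0 w0 bw; ring.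
  by rewrite bDl bZl g1; ring.
have := HG0 ih; rewrite HG HG0 ?scaler0 ?add0r //.
Qed.

Lemma G_piece1 g y : idem g -> G ((g *o y) *o g) = 0.
Proof.
move=> ig; have [g0 g1] := ig; apply: (GL ig); first by rewrite !Hc g0 mulr0.
rewrite bC I3' -(mulxe (bar g)) I4b g0 scale0r.
by rewrite /polar addr0 n0 subrr subr0.
Qed.

Lemma G_piece2 g y : idem g -> G ((g *o y) *o bar g) = 0.
Proof.
move=> ig; have [g0 g1] := ig; apply: (GL ig); first by rewrite !Hc g0 !mul0r.
rewrite bC I3' barK sqe g0 g1 scale0r subr0 scale1r -{2}(mulxe g) I1 g0 mul0r.
by [].
Qed.

Lemma G_all : (exists f, idem f) -> forall w, G w = 0.
Proof.
case=> g ig w; rewrite (idem_decomp w ig) !GD G_piece1 // G_piece2 //.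
have ig' := idem_bar ig.
by rewrite G_piece1 // G_piece2 // !addr0.
Qed.
End Span.

Lemma bsuml (I : Type) (r : seq I) (P : pred I) (Fv : I -> V) z :
  b (\sum_(i <- r | P i) Fv i) z = \sum_(i <- r | P i) b (Fv i) z.
Proof.
apply: (big_rec2 (fun x y => b x z = y)); first exact: b0l.
by move=> i x y _ <-; rewrite bDl.
Qed.

Lemma bsumr (I : Type) (r : seq I) (P : pred I) (Fv : I -> V) z :
  b z (\sum_(i <- r | P i) Fv i) = \sum_(i <- r | P i) b z (Fv i).
Proof. rewrite bC bsuml; apply: eq_bigr => i _; exact: bC. Qed.

Section Local.
Variable D : V -> V.
Hypothesis HD : two_local_automorphism mul D.

Lemma DZ a x : D (a *: x) = a *: D x.
Proof. by have [phi [Hp -> ->]] := HD x (a *: x); rewrite phiZ. Qed.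

Lemma Db x y : b (D x) (D y) = b x y.
Proof. by have [phi [Hp -> ->]] := HD x y; rewrite phib. Qed.

Let m : nat := \dim (fullv : {vspace V}).
Let X := vbasis (fullv : {vspace V}).

Lemma Xspan v : v = \sum_(i < m) coord X i v *: X`_i.
Proof. exact: (coord_vbasis (memvf v)). Qed.

Lemma Xfree : free X.
Proof. exact: basis_free (vbasisP _). Qed.

Lemma img_span v : exists c : 'I_m -> F, v = \sum_(i < m) c i *: D X`_i.
Proof.
pose Y := [tuple of map D X].
have YE (i : 'I_m) : Y`_i = D X`_i.
  rewrite /Y /= (nth_map 0) ?size_tuple; [reflexivity | exact: ltn_ord].
have fY : free Y.
  apply/freeP => k Hk i.
  pose w := \sum_(i < m) k i *: X`_i.
  have w0 : w = 0.
    apply: nondeg => z; rewrite b0l (Xspan z) bsumr big1 // => j _; rewrite bZr.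
    suff -> : b w X`_j = 0 by rewrite mulr0.
    transitivity (b (\sum_(l < m) k l *: Y`_l) (D X`_j)); last by rewrite Hk b0l.
    by rewrite /w !bsuml; apply: eq_bigr => l _; rewrite !bZl YE Db.
  exact: (elimT freeP Xfree k w0 i).
have sY : <<Y>>%VS = fullv.
  apply/eqP; rewrite eqEdim subvf /=; move/eqnP: fY => ->; by rewrite size_tuple.
exists (fun i => coord Y i v).
have vY : v \in <<Y>>%VS by rewrite sY memvf.
rewrite {1}(coord_span vY); apply: eq_bigr => i _; by rewrite YE.
Qed.


Lemma DD x y : D (x + y) = D x + D y.
Proof.
apply/eqP; rewrite -subr_eq0; apply/eqP/Hnd => v.
have [c ->] := img_span v.
rewrite bsumr big1 // => i _; rewrite bZr.
by rewrite bBl bDl !Db bDl subrr mulr0.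
Qed.

Lemma DDZ a x y : D (a *: x + y) = a *: D x + D y.
Proof. by rewrite DD DZ. Qed.

Lemma D0 : D 0 = 0.
Proof. by have := DZ 0 0; rewrite !scale0r. Qed.

Lemma DB x y : D (x - y) = D x - D y.
Proof. by rewrite DD -scaleN1r DZ scaleN1r. Qed.

Lemma Dsum (c : 'I_m -> F) : D (\sum_(i < m) c i *: X`_i) = \sum_(i < m) c i *: D X`_i.
Proof.
apply: (big_rec2 (fun x y => D x = y)); first exact: D0.
by move=> i x y _ <-; rewrite DDZ.
Qed.

Lemma D_inj : injective D.
Proof.
move=> x y Hxy; apply/eqP; rewrite -subr_eq0; apply/eqP.
have [phi [Hp H1 _]] := HD (x - y) (x - y).
apply: (phi_inj Hp); by rewrite (phi0 Hp) -H1 DB Hxy subrr.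
Qed.

Lemma D_bij : bijective D.
Proof.
have Hs v : exists u, D u == v.
  by have [c ->] := img_span v; exists (\sum_(i < m) c i *: X`_i); rewrite Dsum.
exists (fun v => xchoose (Hs v)) => [x|v]; last exact: (eqP (xchooseP (Hs v))).
by apply: D_inj; exact: (eqP (xchooseP (Hs (D x)))).
Qed.

Lemma D_idem f y : idem f -> D (f *o y) = D f *o D y.
Proof.
case=> f0 f1.
set y1 := f *o y; set y2 := bar f *o y.
have Ey : y = y1 + y2 by rewrite /y1 /y2 -oDl f1 scale1r addrC subrK mule.
have [p1 [Hp1 Ef1 Ey1]] := HD f y1.
have [p2 [Hp2 Ef2 Ey2]] := HD f y2.
have E1 : D f *o D y1 = D y1.
  by rewrite Ef1 Ey1 -(phiM Hp1) /y1 sq f0 f1 scale0r subr0 scale1r.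
have E2 : D f *o D y2 = 0.
  by rewrite Ef2 Ey2 -(phiM Hp2) /y2 I4b f0 scale0r (phi0 Hp2).
by rewrite {1}Ey DD oDr E1 E2 addr0.
Qed.

Hypothesis Hiso : isotropic n.

Lemma idem_ex : exists f, idem f.
Proof.
case: Hiso => x [x0 nx].
have [y bxy] : exists y, b x y != 0.
  apply/not_all_not_ex => H; move/eqP: x0; apply; apply: Hnd => y.
  by have := H y; case: eqP.
exists ((b x y)^-1 *: (x *o bar y)); split.
  by rewrite nZ Hc nx mul0r mulr0.
by rewrite bZl I3' mule barK mulVf.
Qed.

Lemma D_mul x y : D (x *o y) = D x *o D y.
Proof.
pose G := fun x => D (x *o y) - D x *o D y.
have HG a u v : G (a *: u + v) = a *: G u + G v.
  rewrite /G oDl oZl !DDZ oDl oZl scalerBr addrACA opprD.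
  by [].
have := G_all HG _ idem_ex x.
rewrite /G => H; apply/eqP; rewrite -subr_eq0 H //.
by move=> f fi; rewrite /G D_idem // subrr.
Qed.

Lemma main : is_automorphism mul D.
Proof. split; [exact: DDZ | exact: D_bij | exact: D_mul]. Qed.

End Local.
End Comp.

Theorem theorem4p3 (F : fieldType) (V : vectType F) (mul : V -> V -> V) (n : V -> F) :
  split_cayley_algebra mul n ->
  forall D : V -> V, two_local_automorphism mul D <-> is_automorphism mul D.
Proof.
case=> [[_ Hmul [e He] [Hq Hnd] Hc] Hiso] D; split.
  move=> HD.
  have Hnz : exists x : V, x != 0 by case: Hiso => x [x0 _]; exists x.
  exact: (main Hmul Hq Hnd Hc He Hnz HD Hiso).
by move=> HD x y; exists D; split.
Qed.
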